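(* Let $R$ be a commutative local ring and $s\in R$. Then $A\in M_2(R;s)$ is strongly $J$-clean if and only if one of the following holds: (1) $A\in J\big(M_2(R;s)\big)$; (2) $I_2-A\in J\big(M_2(R;s)\big)$; (3) the $s$-characteristic polynomial $t^2-tr(A)t+\det_s(A)$ has a root in $J(R)$ and a root in $1+J(R)$.
   Context: A commutative ring $R$ is local if it has a unique maximal ideal $J(R)$ (its Jacobson radical); $J(T)$ denotes the Jacobson radical of a ring $T$. For a commutative ring $R$ and $s\in R$, $M_2(R;s)$ denotes the ring whose elements are the $2\times 2$ arrays $\left[\begin{smallmatrix} a&b\\ c&d\end{smallmatrix}\right]$ with $a,b,c,d\in R$, with componentwise addition and multiplication $\left[\begin{smallmatrix} a&b\\ c&d\end{smallmatrix}\right]\left[\begin{smallmatrix} a'&b'\\ c'&d'\end{smallmatrix}\right]=\left[\begin{smallmatrix} aa'+s^2bc'&ab'+bd'\\ ca'+dc'&s^2cb'+dd'\end{smallmatrix}\right]$, with identity $I_2$. For $A=\left[\begin{smallmatrix} a&b\\ c&d\end{smallmatrix}\right]$, $\det_s(A)=ad-s^2bc$ and $tr(A)=a+d$. An element $a$ of a ring $T$ is strongly $J$-clean if there is an idempotent $e\in T$ with $ae=ea$ and $a-e\in J(T)$. *)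

(* Defs.v *)
From HB Require Import structures.
From mathcomp Require Import all_boot all_order all_algebra.
From mathcomp Require Import ring.
Set Implicit Arguments. Unset Strict Implicit. Unset Printing Implicit Defensive.
Import Order.TTheory GRing.Theory Num.Theory.
Local Open Scope ring_scope.

Definition left_ideal (T : pzRingType) (I : T -> Prop) : Prop :=
  [/\ I 0, (forall x y, I x -> I y -> I (x + y)) & (forall r x, I x -> I (r * x))].

Definition maximal_left_ideal (T : pzRingType) (I : T -> Prop) : Prop :=
  [/\ left_ideal I, ~ I 1 &
      forall K : T -> Prop, left_ideal K -> ~ K 1 -> (forall x, I x -> K x) ->
        forall x, K x -> I x].

Definition jacobson (T : pzRingType) (x : T) : Prop :=
  forall I : T -> Prop, maximal_left_ideal I -> I x.

(* A commutative ring is local if it has a unique maximal ideal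
   (for commutative rings left ideals are the ideals). *)
Definition local_ring (R : comPzRingType) : Prop :=
  exists M : R -> Prop, maximal_left_ideal M /\
    forall N : R -> Prop, maximal_left_ideal N -> forall x, N x <-> M x.

Definition strongly_J_clean (T : pzRingType) (a : T) : Prop :=
  exists e : T, [/\ e * e = e, a * e = e * a & jacobson (a - e)].

Definition M2s (R : comNzRingType) (s : R) : Type := 'M[R]_2.
HB.instance Definition _ (R : comNzRingType) (s : R) :=
  GRing.Zmodule.on (M2s s).

Section M2s.
Variables (R : comNzRingType) (s : R).

Definition mx2 (a b c d : R) : M2s s :=
  \matrix_(i < 2, j < 2)
    if i == 0 :> nat then (if j == 0 :> nat then a else b)
    else (if j == 0 :> nat then c else d).

Definition m11 (A : M2s s) : R := (A : 'M[R]_2) 0 0.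
Definition m12 (A : M2s s) : R := (A : 'M[R]_2) 0 1.
Definition m21 (A : M2s s) : R := (A : 'M[R]_2) 1 0.
Definition m22 (A : M2s s) : R := (A : 'M[R]_2) 1 1.

Definition M2s_one : M2s s := mx2 1 0 0 1.

Definition M2s_mul (A B : M2s s) : M2s s :=
  mx2 (m11 A * m11 B + s ^+ 2 * m12 A * m21 B)
      (m11 A * m12 B + m12 A * m22 B)
      (m21 A * m11 B + m22 A * m21 B)
      (s ^+ 2 * m21 A * m12 B + m22 A * m22 B).

Lemma mx2_eta (A : M2s s) : A = mx2 (m11 A) (m12 A) (m21 A) (m22 A).
Proof.
apply/matrixP => i j; rewrite !mxE.
by case: i => [[|[|//]] ?]; case: j => [[|[|//]] ?];
   rewrite /m11 /m12 /m21 /m22; congr (A _ _); apply: val_inj.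
Qed.

Lemma mx2E a b c d :
  [/\ m11 (mx2 a b c d) = a, m12 (mx2 a b c d) = b,
      m21 (mx2 a b c d) = c & m22 (mx2 a b c d) = d].
Proof. by rewrite /m11 /m12 /m21 /m22 !mxE. Qed.

Lemma mx2_eq a b c d a' b' c' d' :
  a = a' -> b = b' -> c = c' -> d = d' -> mx2 a b c d = mx2 a' b' c' d'.
Proof. by move=> -> -> -> ->. Qed.

Lemma m_add (A B : M2s s) :
  [/\ m11 (A + B) = m11 A + m11 B, m12 (A + B) = m12 A + m12 B,
      m21 (A + B) = m21 A + m21 B & m22 (A + B) = m22 A + m22 B].
Proof. by rewrite /m11 /m12 /m21 /m22 !mxE. Qed.

Lemma M2s_mulA : associative M2s_mul.
Proof.
move=> A B C; rewrite /M2s_mul.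
case: (mx2E (m11 A * m11 B + s ^+ 2 * m12 A * m21 B) (m11 A * m12 B + m12 A * m22 B)
  (m21 A * m11 B + m22 A * m21 B) (s ^+ 2 * m21 A * m12 B + m22 A * m22 B)) => -> -> -> ->.
case: (mx2E (m11 B * m11 C + s ^+ 2 * m12 B * m21 C) (m11 B * m12 C + m12 B * m22 C)
  (m21 B * m11 C + m22 B * m21 C) (s ^+ 2 * m21 B * m12 C + m22 B * m22 C)) => -> -> -> ->.
by apply: mx2_eq; ring.
Qed.

Lemma M2s_mul1r : left_id M2s_one M2s_mul.
Proof.
move=> A; rewrite /M2s_mul /M2s_one; case: (mx2E 1 0 0 1) => -> -> -> ->.
by rewrite [RHS]mx2_eta; apply: mx2_eq; ring.
Qed.

Lemma M2s_mulr1 : right_id M2s_one M2s_mul.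
Proof.
move=> A; rewrite /M2s_mul /M2s_one; case: (mx2E 1 0 0 1) => -> -> -> ->.
by rewrite [RHS]mx2_eta; apply: mx2_eq; ring.
Qed.

Lemma m11_mx2 a b c d : m11 (mx2 a b c d) = a. Proof. by case: (mx2E a b c d). Qed.
Lemma m12_mx2 a b c d : m12 (mx2 a b c d) = b. Proof. by case: (mx2E a b c d). Qed.
Lemma m21_mx2 a b c d : m21 (mx2 a b c d) = c. Proof. by case: (mx2E a b c d). Qed.
Lemma m22_mx2 a b c d : m22 (mx2 a b c d) = d. Proof. by case: (mx2E a b c d). Qed.
Lemma m11D (A B : M2s s) : m11 (A + B) = m11 A + m11 B. Proof. by case: (m_add A B). Qed.
Lemma m12D (A B : M2s s) : m12 (A + B) = m12 A + m12 B. Proof. by case: (m_add A B). Qed.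
Lemma m21D (A B : M2s s) : m21 (A + B) = m21 A + m21 B. Proof. by case: (m_add A B). Qed.
Lemma m22D (A B : M2s s) : m22 (A + B) = m22 A + m22 B. Proof. by case: (m_add A B). Qed.

Lemma mx2_ext (A B : M2s s) : m11 A = m11 B -> m12 A = m12 B ->
  m21 A = m21 B -> m22 A = m22 B -> A = B.
Proof. by move=> *; rewrite (mx2_eta A) (mx2_eta B); apply: mx2_eq. Qed.

Lemma M2s_mulDl : left_distributive M2s_mul +%R.
Proof.
move=> A B C; apply: mx2_ext;
rewrite /M2s_mul ?m11D ?m12D ?m21D ?m22D ?m11_mx2 ?m12_mx2 ?m21_mx2 ?m22_mx2
        ?m11D ?m12D ?m21D ?m22D; ring.
Qed.

Lemma M2s_mulDr : right_distributive M2s_mul +%R.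
Proof.
move=> A B C; apply: mx2_ext;
rewrite /M2s_mul ?m11D ?m12D ?m21D ?m22D ?m11_mx2 ?m12_mx2 ?m21_mx2 ?m22_mx2
        ?m11D ?m12D ?m21D ?m22D; ring.
Qed.

End M2s.

HB.instance Definition _ (R : comNzRingType) (s : R) :=
  GRing.Zmodule_isPzRing.Build (M2s s)
    (@M2s_mulA R s) (@M2s_mul1r R s) (@M2s_mulr1 R s)
    (@M2s_mulDl R s) (@M2s_mulDr R s).

Definition trace2 (R : comNzRingType) (s : R) (A : M2s s) : R := m11 A + m22 A.
Definition det_s (R : comNzRingType) (s : R) (A : M2s s) : R :=
  m11 A * m22 A - s ^+ 2 * m12 A * m21 A.

Definition s_charpoly (R : comNzRingType) (s : R) (A : M2s s) : {poly R} :=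
  'X^2 - (trace2 A) *: 'X + (det_s A)%:P.

(* Main.v *)
Require Import Defs.
From HB Require Import structures.
From mathcomp Require Import all_boot all_order all_algebra.
From mathcomp Require Import ring.
From mathcomp Require Import boolp classical_sets.
Import GRing.Theory.
Local Open Scope ring_scope.

Section Loc.
Variables (R : comNzRingType) (M : R -> Prop).
Hypothesis HM : maximal_left_ideal M.
Hypothesis Hloc : forall N : R -> Prop, maximal_left_ideal N -> forall x, N x <-> M x.

Lemma M0 : M 0. Proof. by case: HM => [[]]. Qed.
Lemma MD x y : M x -> M y -> M (x + y). Proof. by case: HM => [[_ h _] _ _]; apply: h. Qed.
Lemma MM r x : M x -> M (r * x). Proof. by case: HM => [[_ _ h] _ _]; apply: h. Qed.
Lemma MMr r x : M x -> M (x * r). Proof. by rewrite mulrC; apply: MM. Qed.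
Lemma M1 : ~ M 1. Proof. by case: HM. Qed.
Lemma MN x : M x -> M (- x). Proof. by move=> h; rewrite -mulN1r; apply: MM. Qed.
Lemma MB x y : M x -> M y -> M (x - y). Proof. by move=> hx hy; apply: MD => //; apply: MN. Qed.
Lemma Meq x y : x = y -> M x -> M y. Proof. by move=> ->. Qed.
Lemma MeqL x y : M x -> x = y -> M y. Proof. by move=> h <-. Qed.

Lemma unitP x : ~ M x -> exists u, u * x = 1.
Proof.
move=> Mx; case: (pselect (exists u, u * x = 1)) => // nu; exfalso.
pose P := fun B : set R => B = set0 \/ [/\ left_ideal B, ~ B 1 & B x].
have [A [PA Amax]] : exists A, P A /\ forall B, (A `<` B)%classic -> ~ P B.
  apply: Zorn_bigcup => F FP Ftot.
  have memI Y a : F Y -> Y a -> [/\ left_ideal Y, ~ Y 1 & Y x].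
    by move=> FY Ya; case: (FP Y FY) => // Y0; move: Ya; rewrite Y0.
  case: (pselect (exists2 X, F X & X x)) => [[X FX Xx]|nX].
  - right; split.
    + split.
      * exists X => //; by case: (memI X x FX Xx) => [[]].
      * move=> a b [Y1 FY1 Y1a] [Y2 FY2 Y2b]; case: (Ftot _ _ FY1 FY2) => sub.
        -- exists Y2 => //; have [[_ Hadd _] _ _] := memI _ _ FY2 Y2b.
           by apply: Hadd => //; apply: sub.
        -- exists Y1 => //; have [[_ Hadd _] _ _] := memI _ _ FY1 Y1a.
           by apply: Hadd => //; apply: sub.
      * move=> r a [Y FY Ya]; exists Y => //; have [[_ _ Hm] _ _] := memI _ _ FY Ya.
        exact: Hm.
    + by case=> Y FY Y1; have [_ n _] := memI _ _ FY Y1; apply: n.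
    + by exists X.
  - left; apply/seteqP; split=> a //= [Y FY Ya].
    have [_ _ Yx] := memI _ _ FY Ya; exfalso; apply: nX; by exists Y.
case: PA => [A0|[Aid A1 Ax]].
- apply: (Amax (fun z => exists r, z = r * x)); first split.
  + by rewrite A0 => a.
  + by move=> sub; have := sub x; rewrite A0; apply; exists 1; rewrite mul1r.
  right; split.
  + split; first by exists 0; rewrite mul0r.
    * by move=> a b [r1 ->] [r2 ->]; exists (r1 + r2); rewrite mulrDl.
    * by move=> r a [r1 ->]; exists (r * r1); rewrite mulrA.
  + by case=> r h; apply: nu; exists r.
  + by exists 1; rewrite mul1r.
- have Amx : maximal_left_ideal A.
    split => // K HK K1 AK z Kz; apply: contrapT => nAz.
    apply: (Amax K); last by right; split => //; apply: AK.
    by split => // sub; apply: nAz; apply: sub.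
  apply: Mx; have := proj1 (Hloc A Amx x); apply.
  exact: Ax.
Qed.

Lemma Mcase (x : R) : M x \/ exists u, u * x = 1.
Proof. by case: (pselect (M x)) => h; [left | right; apply: unitP]. Qed.

Lemma cancelR (u x r : R) : u * x = 1 -> r * x = 0 -> r = 0.
Proof. by move=> hu hr; rewrite -[r]mulr1 -hu mulrA [r * u]mulrC -mulrA hr mulr0. Qed.

Lemma jacR (x : R) : jacobson x <-> M x.
Proof.
split; first by move/(_ M HM).
by move=> Mx I HI; apply: (proj2 (Hloc I HI x)).
Qed.

Variable s : R.
Implicit Types X Y Z : M2s s.

Lemma m11M X Y : m11 (X * Y) = m11 X * m11 Y + s ^+ 2 * m12 X * m21 Y.
Proof. exact: m11_mx2. Qed.
Lemma m12M X Y : m12 (X * Y) = m11 X * m12 Y + m12 X * m22 Y.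
Proof. exact: m12_mx2. Qed.
Lemma m21M X Y : m21 (X * Y) = m21 X * m11 Y + m22 X * m21 Y.
Proof. exact: m21_mx2. Qed.
Lemma m22M X Y : m22 (X * Y) = s ^+ 2 * m21 X * m12 Y + m22 X * m22 Y.
Proof. exact: m22_mx2. Qed.
Lemma m11_1 : m11 (1 : M2s s) = 1. Proof. exact: m11_mx2. Qed.
Lemma m12_1 : m12 (1 : M2s s) = 0. Proof. exact: m12_mx2. Qed.
Lemma m21_1 : m21 (1 : M2s s) = 0. Proof. exact: m21_mx2. Qed.
Lemma m22_1 : m22 (1 : M2s s) = 1. Proof. exact: m22_mx2. Qed.
Lemma m11N X : m11 (- X) = - m11 X. Proof. by rewrite /m11 mxE. Qed.
Lemma m12N X : m12 (- X) = - m12 X. Proof. by rewrite /m12 mxE. Qed.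
Lemma m21N X : m21 (- X) = - m21 X. Proof. by rewrite /m21 mxE. Qed.
Lemma m22N X : m22 (- X) = - m22 X. Proof. by rewrite /m22 mxE. Qed.
Lemma m11_0 : m11 (0 : M2s s) = 0. Proof. by rewrite /m11 mxE. Qed.
Lemma m12_0 : m12 (0 : M2s s) = 0. Proof. by rewrite /m12 mxE. Qed.
Lemma m21_0 : m21 (0 : M2s s) = 0. Proof. by rewrite /m21 mxE. Qed.
Lemma m22_0 : m22 (0 : M2s s) = 0. Proof. by rewrite /m22 mxE. Qed.

Definition mE := (m11M, m12M, m21M, m22M, m11_1, m12_1, m21_1, m22_1,
  m11N, m12N, m21N, m22N, m11_0, m12_0, m21_0, m22_0,
  @m11D R s, @m12D R s, @m21D R s, @m22D R s,
  @m11_mx2 R s, @m12_mx2 R s, @m21_mx2 R s, @m22_mx2 R s).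

Definition PJ X := [/\ M (m11 X), M (m22 X), M (s * m12 X) & M (s * m21 X)].

Lemma Kone (K : M2s s -> Prop) X : left_ideal K ->
  (forall W, m11 W = 0 -> m21 W = 0 -> K W) -> K X -> ~ M (m11 X) -> K 1.
Proof.
case=> K0 KD KM H0 KX nM; have [u hu] := unitP _ nM.
have KY := KM (mx2 s u 0 0 0) X KX.
rewrite -(subrK (mx2 s u 0 0 0 * X) 1); apply: KD => //; apply: H0; rewrite !mE.
  by rewrite -hu; ring.
by ring.
Qed.

Lemma Ktwo (K : M2s s -> Prop) X : left_ideal K ->
  (forall W, m22 W = 0 -> m12 W = 0 -> K W) -> K X -> ~ M (m22 X) -> K 1.
Proof.
case=> K0 KD KM H0 KX nM; have [u hu] := unitP _ nM.
have KY := KM (mx2 s 0 0 0 u) X KX.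
rewrite -(subrK (mx2 s 0 0 0 u * X) 1); apply: KD => //; apply: H0; rewrite !mE.
  by rewrite -hu; ring.
by ring.
Qed.

Lemma I1max : maximal_left_ideal (fun X => M (m11 X) /\ M (s * m21 X)).
Proof.
split.
- split.
  + by rewrite !mE mulr0; split; apply: M0.
  + by move=> X Y [h1 h2] [h3 h4]; rewrite !mE mulrDr; split; apply: MD.
  + move=> Y X [h1 h2]; rewrite !mE; split.
      apply: MD; first by apply: MM.
      have -> : s ^+ 2 * m12 Y * m21 X = (m12 Y * s) * (s * m21 X) by ring.
      by apply: MM.
    have -> : s * (m21 Y * m11 X + m22 Y * m21 X) = (s * m21 Y) * m11 X + m22 Y * (s * m21 X) by ring.
    by apply: MD; apply: MM.
- by rewrite !mE => -[h _]; apply: M1.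
move=> K HK K1 sub Z KZ; apply: contrapT => nI; apply: K1.
have H0 W : m11 W = 0 -> m21 W = 0 -> K W.
  by move=> h1 h2; apply: sub; rewrite h1 h2 mulr0; split; apply: M0.
case: (pselect (M (m11 Z))) => h11; last exact: Kone HK H0 KZ h11.
have h21 : ~ M (s * m21 Z) by move=> h; apply: nI.
have [u hu] := unitP _ h21.
have [v hv] : exists v, v * s = 1.
  by apply: unitP => hs; apply: h21; apply: MMr.
have [K0 KD KM] := HK.
apply: (Kone K (mx2 s 0 (u * v) 0 0 * Z) HK H0); first by apply: KM.
rewrite !mE; have -> : 0 * m11 Z + s ^+ 2 * (u * v) * m21 Z = (u * (s * m21 Z)) * (v * s) by ring.
by rewrite hu hv mulr1; apply: M1.
Qed.

Lemma I2max : maximal_left_ideal (fun X => M (m22 X) /\ M (s * m12 X)).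
Proof.
split.
- split.
  + by rewrite !mE mulr0; split; apply: M0.
  + by move=> X Y [h1 h2] [h3 h4]; rewrite !mE mulrDr; split; apply: MD.
  + move=> Y X [h1 h2]; rewrite !mE; split.
      apply: MD; last by apply: MM.
      have -> : s ^+ 2 * m21 Y * m12 X = (m21 Y * s) * (s * m12 X) by ring.
      by apply: MM.
    have -> : s * (m11 Y * m12 X + m12 Y * m22 X) = m11 Y * (s * m12 X) + (s * m12 Y) * m22 X by ring.
    by apply: MD; apply: MM.
- by rewrite !mE => -[h _]; apply: M1.
move=> K HK K1 sub Z KZ; apply: contrapT => nI; apply: K1.
have H0 W : m22 W = 0 -> m12 W = 0 -> K W.
  by move=> h1 h2; apply: sub; rewrite h1 h2 mulr0; split; apply: M0.
case: (pselect (M (m22 Z))) => h22; last exact: Ktwo HK H0 KZ h22.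
have h12 : ~ M (s * m12 Z) by move=> h; apply: nI.
have [u hu] := unitP _ h12.
have [v hv] : exists v, v * s = 1.
  by apply: unitP => hs; apply: h12; apply: MMr.
have [K0 KD KM] := HK.
apply: (Ktwo K (mx2 s 0 0 (u * v) 0 * Z) HK H0); first by apply: KM.
rewrite !mE; have -> : s ^+ 2 * (u * v) * m12 Z + 0 * m22 Z = (u * (s * m12 Z)) * (v * s) by ring.
by rewrite hu hv mulr1; apply: M1.
Qed.

Lemma PJmulL Y X : PJ X -> PJ (Y * X).
Proof.
case=> h11 h22 h12 h21; split; rewrite !mE.
- apply: MD; first by apply: MM.
  have -> : s ^+ 2 * m12 Y * m21 X = (m12 Y * s) * (s * m21 X) by ring.
  by apply: MM.
- apply: MD; last by apply: MM.
  have -> : s ^+ 2 * m21 Y * m12 X = (m21 Y * s) * (s * m12 X) by ring.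
  by apply: MM.
- have -> : s * (m11 Y * m12 X + m12 Y * m22 X) = m11 Y * (s * m12 X) + (s * m12 Y) * m22 X by ring.
  by apply: MD; apply: MM.
- have -> : s * (m21 Y * m11 X + m22 Y * m21 X) = (s * m21 Y) * m11 X + m22 Y * (s * m21 X) by ring.
  by apply: MD; apply: MM.
Qed.

Lemma jacP X : jacobson X <-> PJ X.
Proof.
split.
  move=> hj; have [h11 h21] := hj _ I1max; have [h22 h12] := hj _ I2max; by split.
move=> hX I HI; apply: contrapT => nIX.
have [[I0 ID IM] I1 Imax] := HI.
pose K := fun Z => exists i r, I i /\ Z = i + r * X.
have HK : left_ideal K.
  split.
  - by exists 0, 0; split => //; rewrite mul0r addr0.
  - move=> a b [i1 [r1 [hi1 ->]]] [i2 [r2 [hi2 ->]]]; exists (i1 + i2), (r1 + r2).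
    by split; [apply: ID | rewrite mulrDl addrACA].
  - move=> r a [i [r1 [hi ->]]]; exists (r * i), (r * r1).
    by split; [apply: IM | rewrite mulrDr mulrA].
have [i [r [hi e1]]] : K 1.
  apply: contrapT => nK1; apply: nIX; apply: (Imax K HK nK1).
    by move=> z iz; exists z, 0; split => //; rewrite mul0r addr0.
  by exists 0, 1; split => //; rewrite mul1r add0r.
have hU : I (1 - r * X) by rewrite e1 addrK.
have [p11 p22 p12 p21] := PJmulL r X hX.
have q11 : M (1 - m11 (1 - r * X)) by apply: (MeqL _ _ p11); rewrite !mE; ring.
have q22 : M (1 - m22 (1 - r * X)) by apply: (MeqL _ _ p22); rewrite !mE; ring.
have q12 : M (s * m12 (1 - r * X)) by apply: (MeqL _ _ (MN _ p12)); rewrite !mE; ring.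
have q21 : M (s * m21 (1 - r * X)) by apply: (MeqL _ _ (MN _ p21)); rewrite !mE; ring.
move: hU q11 q22 q12 q21; generalize (1 - r * X) => U hU q11 q22 q12 q21.
have ndet : ~ M (m11 U * m22 U - s ^+ 2 * m12 U * m21 U).
  move=> hd; apply: M1.
  have k : 1 = (m11 U * m22 U - s ^+ 2 * m12 U * m21 U) +
     ((1 - m11 U) + (1 - m22 U) - (1 - m11 U) * (1 - m22 U) + (s * m12 U) * (s * m21 U)) by ring.
  rewrite k; apply: MD => //; apply: MD; [apply: MB; [apply: MD => //| apply: MM] | apply: MM] => //.
have [v hv] := unitP _ ndet.
have VU : mx2 s (v * m22 U) (- (v * m12 U)) (- (v * m21 U)) (v * m11 U) * U = 1.
  apply: mx2_ext; rewrite !mE; try ring.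
    by rewrite -hv; ring.
  by rewrite -hv; ring.
apply: I1; rewrite -VU; exact: IM.
Qed.

Lemma PJN X : PJ X -> PJ (- X).
Proof. by case=> *; split; rewrite !mE ?mulrN; apply: MN. Qed.

Definition sc (r : R) : M2s s := mx2 s r 0 0 r.

Lemma sc1 : sc 1 = 1. Proof. by apply: mx2_ext; rewrite /sc !mE. Qed.
Lemma sc0 : sc 0 = 0. Proof. by apply: mx2_ext; rewrite /sc !mE. Qed.

Lemma polP X Y : X * Y + Y * X = sc (trace2 X) * Y + sc (trace2 Y) * X
   - sc (trace2 X * trace2 Y - trace2 (X * Y)).
Proof. by apply: mx2_ext; rewrite /sc /trace2 !mE; ring. Qed.

Lemma corner A g : g * g = g -> A * g = g * A -> trace2 g = 1 ->
  A * g = sc (trace2 (A * g)) * g.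
Proof.
move=> gg cg tg; have := polP g (A * g).
have h1 : g * (A * g) = A * g by rewrite mulrA -cg -mulrA gg.
have h2 : A * g * g = A * g by rewrite -mulrA gg.
rewrite h1 h2 tg mul1r subrr sc0 subr0 sc1 mul1r.
by move/addrI.
Qed.

Lemma subeq0 (x y : R) : x - y = 0 -> x = y. Proof. exact: subr0_eq. Qed.

Lemma fwd A e : e * e = e -> A * e = e * A -> PJ (A - e) ->
 [\/ jacobson A, jacobson (1 - A)
   | (exists2 a : R, jacobson a & root (s_charpoly A) a) /\
     (exists2 b : R, jacobson (b - 1) & root (s_charpoly A) b)].
Proof.
move=> ee cA [j11 j22 j12 j21].
rewrite !mE in j11 j22 j12 j21.
have E2 : m12 e * (m11 e + m22 e - 1) = 0.
  have k : m12 e * (m11 e + m22 e - 1) = m12 (e * e) - m12 e by rewrite m12M; ring.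
  by rewrite k ee subrr.
have E3 : m21 e * (m11 e + m22 e - 1) = 0.
  have k : m21 e * (m11 e + m22 e - 1) = m21 (e * e) - m21 e by rewrite m21M; ring.
  by rewrite k ee subrr.
have Dx : m11 e * (m11 e + m22 e - 1) = det_s e.
  have k : m11 e * (m11 e + m22 e - 1) = det_s e + (m11 (e * e) - m11 e)
    by rewrite /det_s m11M; ring.
  by rewrite k ee subrr addr0.
have Dw : m22 e * (m11 e + m22 e - 1) = det_s e.
  have k : m22 e * (m11 e + m22 e - 1) = det_s e + (m22 (e * e) - m22 e)
    by rewrite /det_s m22M; ring.
  by rewrite k ee subrr addr0.
have Dd : det_s e * det_s e = det_s e.
  have k : det_s (e * e) = det_s e * det_s e by rewrite /det_s !mE; ring.
  by rewrite -k ee.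
case: (Mcase (m11 e + m22 e - 1)) => [Mt | [u hu]]; last first.
  have y0 := cancelR _ _ _ hu E2.
  have z0 := cancelR _ _ _ hu E3.
  have xw : m11 e = m22 e.
    by apply: subeq0; apply: (cancelR _ _ _ hu); rewrite mulrBl Dx Dw subrr.
  have xx : m11 e * (m11 e - 1) = 0.
    have k : m11 e * (m11 e - 1) = (m11 (e * e) - m11 e) - s ^+ 2 * m12 e * m21 e
      by rewrite m11M; ring.
    by rewrite k ee subrr y0; ring.
  case: (Mcase (m11 e)) => [Mx | [v hv]].
    have [v hv] : exists v, v * (m11 e - 1) = 1.
      apply: unitP => h; apply: M1.
      by apply: (MeqL _ _ (MB _ _ Mx h)); ring.
    have x0 := cancelR _ _ _ hv xx.
    have e0 : e = 0 by apply: mx2_ext; rewrite !mE // -xw.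
    constructor 1; apply/jacP; split.
    - by apply: (MeqL _ _ j11); rewrite e0 m11_0; ring.
    - by apply: (MeqL _ _ j22); rewrite e0 m22_0; ring.
    - by apply: (MeqL _ _ j12); rewrite e0 m12_0; ring.
    - by apply: (MeqL _ _ j21); rewrite e0 m21_0; ring.
  have x1 : m11 e = 1.
    apply: subeq0; apply: (cancelR _ _ _ hv); by rewrite mulrC.
  have e1 : e = 1 by apply: mx2_ext; rewrite !mE // -xw.
  constructor 2; apply/jacP; split.
  - by apply: (MeqL _ _ (MN _ j11)); rewrite e1 !mE; ring.
  - by apply: (MeqL _ _ (MN _ j22)); rewrite e1 !mE; ring.
  - by apply: (MeqL _ _ (MN _ j12)); rewrite e1 !mE; ring.
  - by apply: (MeqL _ _ (MN _ j21)); rewrite e1 !mE; ring.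
have Md : M (det_s e) by rewrite -Dx; apply: MM.
have d0 : det_s e = 0.
  have [v hv] : exists v, v * (det_s e - 1) = 1.
    apply: unitP => h; apply: M1.
    by apply: (MeqL _ _ (MB _ _ Md h)); ring.
  by apply: (cancelR _ _ _ hv); rewrite mulrBr mulr1 Dd subrr.
have t1 : m11 e + m22 e = 1.
  have [v hv] : exists v, v * (m11 e + m22 e) = 1.
    apply: unitP => h; apply: M1.
    by apply: (MeqL _ _ (MB _ _ h Mt)); ring.
  apply: subeq0; apply: (cancelR _ _ _ hv).
  by rewrite mulrC mulrDl Dx Dw d0 addr0.
have hAe := corner A e ee cA t1.
have ff : (1 - e) * (1 - e) = 1 - e.
  by rewrite mulrBr mulr1 mulrBl mul1r ee subrr subr0.
have cf : A * (1 - e) = (1 - e) * A by rewrite mulrBr mulrBl mulr1 mul1r cA.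
have tf : trace2 (1 - e) = 1.
  have k : trace2 (1 - e) - 1 = 1 - (m11 e + m22 e) by rewrite /trace2 !mE; ring.
  by apply: subeq0; rewrite k t1 subrr.
have hAf := corner A (1 - e) ff cf tf.
have hA : A = sc (trace2 (A * e)) * e + sc (trace2 (A * (1 - e))) * (1 - e).
  by rewrite -hAe -hAf -mulrDr [e + _]addrC subrK mulr1.
have Ma : M (trace2 (A * (1 - e))).
  have k : trace2 (A * (1 - e)) =
    (m11 A - m11 e) * (1 - m11 e) + (m22 A - m22 e) * (1 - m22 e)
    - (s * m21 e) * (s * (m12 A - m12 e)) - (s * m12 e) * (s * (m21 A - m21 e))
    - ((m11 (e * e) - m11 e) + (m22 (e * e) - m22 e)).
    by rewrite /trace2 !mE; ring.
  rewrite k ee !subrr addr0 subr0.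
  apply: MB; last by apply: MM.
  apply: MB; last by apply: MM.
  by apply: MD; apply: MMr.
have Mb : M (trace2 (A * e) - 1).
  have k : trace2 (A * e) - 1 = (m11 A - m11 e) + (m22 A - m22 e)
    + (m11 e + m22 e - 1) - trace2 (A * (1 - e)).
    by rewrite /trace2 !mE; ring.
  rewrite k t1 subrr addr0; apply: MB => //; exact: MD.
have de0 : m11 e * (1 - m11 e) - s ^+ 2 * m12 e * m21 e = 0.
  by rewrite -d0 /det_s -t1; ring.
have hw : m22 e = 1 - m11 e by rewrite -t1; ring.
move: Ma Mb hA; generalize (trace2 (A * (1 - e))) (trace2 (A * e)) => al be Ma Mb hA.
constructor 3; split.
- exists al; first by apply/jacR.
  rewrite /root /s_charpoly !(hornerD, hornerN, hornerZ, hornerX, hornerXn, hornerC); apply/eqP.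
  rewrite hA /trace2 /det_s /sc !mE hw.
  have k : forall z : R, z = (be - al) ^+ 2 * (m11 e * (1 - m11 e) - s ^+ 2 * m12 e * m21 e) -> z = 0.
    by move=> z ->; rewrite de0 mulr0.
  by apply: k; ring.
- exists be; first by apply/jacR.
  rewrite /root /s_charpoly !(hornerD, hornerN, hornerZ, hornerX, hornerXn, hornerC); apply/eqP.
  rewrite hA /trace2 /det_s /sc !mE hw.
  have k : forall z : R, z = (be - al) ^+ 2 * (m11 e * (1 - m11 e) - s ^+ 2 * m12 e * m21 e) -> z = 0.
    by move=> z ->; rewrite de0 mulr0.
  by apply: k; ring.
Qed.

Lemma Mlin (p q z w c : R) : p = q -> M w -> z = c * (p - q) + w -> M z.
Proof. by move=> -> hw ->; rewrite subrr mulr0 add0r. Qed.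

Lemma Mlin0 (p q r t : R) (hp : p = q) (hr : r = t) (c1 c2 : R) (z : R) :
  z = c1 * (p - q) + c2 * (r - t) -> z = 0.
Proof. by move=> ->; rewrite hp hr !subrr !mulr0 addr0. Qed.

Lemma bwd3 (A : M2s s) (a b : R) : M a -> M (b - 1) -> root (s_charpoly A) a ->
  root (s_charpoly A) b -> strongly_J_clean A.
Proof.
move=> Ma Mb; rewrite /root /s_charpoly !(hornerD, hornerN, hornerZ, hornerX, hornerXn, hornerC).
move=> /eqP ra /eqP rb.
have [u hu] : exists u, u * (b - a) = 1.
  apply: unitP => h; apply: M1.
  by apply: (MeqL _ _ (MD _ _ (MB _ _ h Mb) Ma)); ring.
have hT : trace2 A = a + b.
  have k : (a + b - trace2 A) * (b - a) =
    (b ^+ 2 - trace2 A * b + det_s A) - (a ^+ 2 - trace2 A * a + det_s A) by ring.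
  rewrite ra rb subrr in k.
  by apply/esym/subeq0; apply: (cancelR _ _ _ hu).
have hD : det_s A = a * b.
  have k : det_s A - a * b = (a ^+ 2 - trace2 A * a + det_s A) + a * (trace2 A - (a + b)) by ring.
  by apply: subeq0; rewrite k ra hT subrr mulr0 addr0.
rewrite /trace2 in hT; rewrite /det_s in hD.
have Z : (A - sc a) * (A - sc b) = 0.
  apply: mx2_ext; rewrite /sc !mE.
  - apply: (Mlin0 _ _ _ _ hT hD (m11 A) (-1)); ring.
  - apply: (Mlin0 _ _ _ _ hT hD (m12 A) 0); ring.
  - apply: (Mlin0 _ _ _ _ hT hD (m21 A) 0); ring.
  - apply: (Mlin0 _ _ _ _ hT hD (m22 A) (-1)); ring.
pose e := sc u * (A - sc a).
exists e; split.
- have k : e * e = sc (u * u) * ((A - sc a) * (A - sc b)) + sc (u * u * (b - a)) * (A - sc a)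
    by apply: mx2_ext; rewrite /e /sc !mE; ring.
  by rewrite k Z mulr0 add0r -mulrA hu mulr1.
- by apply: mx2_ext; rewrite /e /sc !mE; ring.
- have Mu : M (u * ((b - 1) - a)) by apply: MM; apply: MB.
  apply/jacP; split; rewrite /e /sc !mE.
  + apply: (Mlin _ _ _ (u * ((b - 1) - a) * m11 A + u * a) (- m11 A) hu).
      by apply: MD; [apply: MMr | apply: MM].
    ring.
  + apply: (Mlin _ _ _ (u * ((b - 1) - a) * m22 A + u * a) (- m22 A) hu).
      by apply: MD; [apply: MMr | apply: MM].
    ring.
  + apply: (Mlin _ _ _ (s * m12 A * (u * ((b - 1) - a))) (- (s * m12 A)) hu).
      by apply: MM.
    ring.
  + apply: (Mlin _ _ _ (s * m21 A * (u * ((b - 1) - a))) (- (s * m21 A)) hu).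
      by apply: MM.
    ring.
Qed.

Lemma main_sec (A : M2s s) : strongly_J_clean A <->
  [\/ jacobson A,
       jacobson (1 - A)
     | (exists2 a : R, jacobson a & root (s_charpoly A) a) /\
       (exists2 b : R, jacobson (b - 1) & root (s_charpoly A) b)].
Proof.
split.
  case=> e [ee cA hj]; exact: (fwd A e ee cA (proj1 (jacP _) hj)).
case.
- move=> hA; exists 0; split; [by rewrite mulr0 | by rewrite mulr0 mul0r | by rewrite subr0].
- move=> hA; exists 1; split; [by rewrite mulr1 | by rewrite mulr1 mul1r | ].
  apply/jacP; rewrite -opprB; apply: PJN; exact/jacP.
- case=> [[a ja ra] [b jb rb]]; apply: (bwd3 A a b) => //.
    exact/jacR.
  exact/jacR.
Qed.

End Loc.

Theorem theorem3p6 (R : comNzRingType) (s : R) (A : M2s s) :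
  local_ring R ->
  (strongly_J_clean A <->
   [\/ jacobson A,
       jacobson (1 - A)
     | (exists2 a : R, jacobson a & root (s_charpoly A) a) /\
       (exists2 b : R, jacobson (b - 1) & root (s_charpoly A) b)]).
Proof.
case=> M [HM Hloc]; exact: (@main_sec R M HM Hloc s A).
Qed.
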